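(* Let $p$ be a prime and let $G$ be a finite Abelian $p$-group. Let $S$ be a normal sequence over $G$ with $|S|=\mathsf{D}(G)+i-1$, where $i\in\{1,2,\dots,p-1\}$. Then $S=0^iT$, i.e. $S$ consists of $i$ copies of the zero element $0\in G$ together with a sequence $T$ over $G$ that is zero-sumfree.
   Context: A sequence over a finite Abelian group $G$ (written additively) is a finite multiset of elements of $G$ (repetitions allowed, order disregarded); its length $|S|$ is the number of terms counted with multiplicity, and a subsequence is a sub-multiset. For $S=g_1\cdots g_\ell$, $\sigma(S)=\sum_i g_i$. $S$ is a zero-sum sequence if $\sigma(S)=0$; $S$ is zero-sumfree if no non-empty subsequence has sum $0$. The Davenport constant $\mathsf{D}(G)$ is the smallest positive integer $t$ such that every sequence over $G$ of length at least $t$ contains a non-empty zero-sum subsequence. A sequence $S$ over $G$ with $|S|\ge \mathsf{D}(G)$ is called normal if every zero-sum subsequence $S'$ of $S$ satisfies $|S'|\le |S|-\mathsf{D}(G)+1$. The notation $0^iT$ denotes the sequence obtained from $T$ by adjoining $i$ copies of $0$. *)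

(* Defs.v *)
From HB Require Import structures.
From mathcomp Require Import all_boot all_order all_algebra.
Set Implicit Arguments. Unset Strict Implicit. Unset Printing Implicit Defensive.
Import GRing.Theory.
Local Open Scope ring_scope.

(* A sequence over G (a finite multiset) is represented by a list [seq G];
   only its multiset content (counts) matters in everything below. *)

Definition sigma (G : finZmodType) (S : seq G) : G := \sum_(g <- S) g.

Definition submseq (G : finZmodType) (T S : seq G) : Prop :=
  forall x : G, (count_mem x T <= count_mem x S)%N.

Definition zero_sum (G : finZmodType) (S : seq G) : Prop := sigma S = 0.

Definition zero_sumfree (G : finZmodType) (S : seq G) : Prop :=
  forall T : seq G, submseq T S -> T != [::] -> sigma T != 0.

Definition davenport_prop (G : finZmodType) (t : nat) : Prop :=
  forall S : seq G, (t <= size S)%N ->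
    exists T : seq G, [/\ submseq T S, T != [::] & zero_sum T].

Definition is_davenport (G : finZmodType) (D : nat) : Prop :=
  [/\ (0 < D)%N, davenport_prop G D &
      forall t : nat, (0 < t)%N -> davenport_prop G t -> (D <= t)%N].

Definition normal_seq (G : finZmodType) (D : nat) (S : seq G) : Prop :=
  (D <= size S)%N /\
  forall S' : seq G, submseq S' S -> zero_sum S' -> (size S' <= size S - D + 1)%N.

(* Main.v *)
Require Import Defs.
From HB Require Import structures.
From mathcomp Require Import all_boot all_order all_algebra.
From mathcomp Require Import all_fingroup all_solvable zify.
Set Implicit Arguments. Unset Strict Implicit. Unset Printing Implicit Defensive.
Import GRing.Theory.
Local Open Scope ring_scope.



Lemma prod_delta (A : comNzRingType) r (y : 'I_r -> A) (j : 'I_r) :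
  \prod_k y k ^+ (k == j) = y j.
Proof.
rewrite (bigD1 j) //= eqxx expr1 big1 ?mulr1 // => k /negbTE ->; exact: expr0.
Qed.

Lemma sum_delta r (j : 'I_r) : (\sum_k ((k == j) : nat) = 1)%N.
Proof.
rewrite (bigD1 j) //= eqxx big1 ?addn0 // => k /negbTE -> //.
Qed.

Lemma nilp_lemma (A : comNzRingType) (r : nat) (y : 'I_r -> A) (q : 'I_r -> nat)
  (c : A) (hy : forall j, y j ^+ q j = 0) (s : seq A)
  (hs : forall a, a \in s -> exists cf : 'I_r -> A, a = \sum_j cf j * y j) :
  forall e : 'I_r -> nat, exists B,
   (\prod_j y j ^+ e j) * \prod_(a <- s) (c + a)
     = c ^+ (size s + \sum_j e j - \sum_j (q j).-1)%N * B.
Proof.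
elim: s hs => [|a s IH] hs e.
  rewrite big_nil mulr1 /= add0n.
  have [le|lt] := leqP (\sum_j e j) (\sum_j (q j).-1).
    by exists (\prod_j y j ^+ e j); move: le; rewrite -subn_eq0 => /eqP ->; rewrite expr0 mul1r.
  exists 0; rewrite mulr0.
  have [j hj] : exists j, (q j <= e j)%N.
    apply/existsP; apply: contraLR lt; rewrite negb_exists => /forallP H.
    rewrite -leqNgt; apply: leq_sum => j _; move: (H j); rewrite -ltnNge.
    by case: (q j).
  by rewrite (bigD1 j) //= -(subnK hj) exprD hy mulr0 mul0r.
have [cf ->] := hs a (mem_head a s).
have hs' : forall b, b \in s -> exists cf : 'I_r -> A, b = \sum_j cf j * y j.
  by move=> b hb; apply: hs; rewrite inE hb orbT.
set m := (size (a :: s) + \sum_j e j - \sum_j (q j).-1)%N.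
pose Dv (x : A) := exists B, x = c ^+ m * B.
have DvD : forall x1 x2, Dv x1 -> Dv x2 -> Dv (x1 + x2).
  by move=> x1 x2 [B1 ->] [B2 ->]; exists (B1 + B2); rewrite mulrDr.
rewrite big_cons mulrDl mulrDr.
apply: (DvD).
  have [B hB] := IH hs' e.
  set m0 := (size s + \sum_j e j - \sum_j (q j).-1)%N in hB.
  have hm : (m <= m0.+1)%N.
    by rewrite /m /m0 /=; lia.
  exists (c ^+ (m0.+1 - m) * B).
  by rewrite mulrCA hB [LHS]mulrA -exprS [RHS]mulrA -exprD subnKC.
rewrite big_distrl big_distrr /=.
apply: (big_ind Dv); first by exists 0; rewrite mulr0.
  exact: DvD.
move=> j _.
pose ej := fun k => (e k + (k == j))%N.
have [B hB] := IH hs' ej.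
exists (cf j * B).
have -> : (m = size s + \sum_k ej k - \sum_j (q j).-1)%N.
  by rewrite /m /ej big_split /= sum_delta /=; lia.
rewrite [RHS]mulrCA -hB /ej /=.
have E : \prod_k y k ^+ (e k + (k == j))%N = \prod_k y k ^+ e k * y j.
  by rewrite -prod_delta -big_split; apply: eq_bigr => k _; rewrite exprD.
rewrite E.
by rewrite mulrCA -!mulrA; congr (_ * _); rewrite mulrCA !mulrA.
Qed.


Section GR.
Variables (G : finZmodType) (F : comNzRingType).
Definition gr : Type := {ffun G -> F}.
HB.instance Definition _ := GRing.Zmodule.on gr.
Definition gmul (f g : gr) : gr := [ffun z => \sum_x f x * g (z - x)].
Definition gone : gr := [ffun z => (z == 0)%:R].
Lemma gaddE (f g : gr) z : (f + g) z = f z + g z. Proof. by rewrite ffunE. Qed.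
Lemma goppE (f : gr) z : (- f) z = - f z. Proof. by rewrite ffunE. Qed.
Lemma gzeroE z : (0 : gr) z = 0. Proof. by rewrite ffunE. Qed.

Fact gmulA : associative gmul.
Proof.
move=> f g h; apply/ffunP=> z; rewrite !ffunE.
under eq_bigr do rewrite ffunE big_distrr /=.
under [RHS]eq_bigr do rewrite ffunE big_distrl /=.
rewrite [RHS]exchange_big /=; apply: eq_bigr => y _.
rewrite [RHS](reindex_inj (addrI y)) /=; apply: eq_bigr => w _.
by rewrite mulrA (addrC y w) addrK opprD addrA (addrAC z).
Qed.
Fact gmulC : commutative gmul.
Proof.
move=> f g; apply/ffunP=> z; rewrite !ffunE.
rewrite (reindex_inj (can_inj (subKr z))) /=; apply: eq_bigr => x _.
by rewrite subKr mulrC.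
Qed.
Fact gmul1 : left_id gone gmul.
Proof.
move=> f; apply/ffunP=> z; rewrite !ffunE (bigD1 0) //= big1 => [|x /negbTE nx].
  by rewrite ffunE eqxx mul1r subr0 addr0.
by rewrite ffunE nx mul0r.
Qed.
Fact gmulDl : left_distributive gmul +%R.
Proof.
move=> f1 f2 g; apply/ffunP=> z; rewrite !ffunE -big_split; apply: eq_bigr => x _.
by rewrite !ffunE mulrDl.
Qed.
Fact gone0 : gone != 0.
Proof. by apply/eqP=> /ffunP /(_ 0); rewrite !ffunE eqxx; apply/eqP/oner_neq0. Qed.
HB.instance Definition _ := GRing.Zmodule_isComNzRing.Build gr gmulA gmulC gmul1 gmulDl gone0.

Lemma gmulE (f g : gr) z : (f * g) z = \sum_x f x * g (z - x). Proof. by rewrite ffunE. Qed.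
Lemma goneE z : (1 : gr) z = (z == 0)%:R. Proof. by rewrite ffunE. Qed.
Definition X (a : G) : gr := [ffun z => (z == a)%:R].
Definition sc (u : F) : gr := [ffun z => (z == 0)%:R * u].

Lemma XmulE a (f : gr) z : (X a * f) z = f (z - a).
Proof.
rewrite gmulE (bigD1 a) //= big1 => [|x /negbTE nx]; first by rewrite ffunE eqxx mul1r addr0.
by rewrite ffunE nx mul0r.
Qed.
Lemma scmulE u (f : gr) z : (sc u * f) z = u * f z.
Proof.
rewrite gmulE (bigD1 0) //= big1 => [|x /negbTE nx]; first by rewrite ffunE eqxx mul1r subr0 addr0.
by rewrite ffunE nx mul0r mul0r.
Qed.
Lemma XM a b : X a * X b = X (a + b).
Proof. by apply/ffunP=> z; rewrite XmulE !ffunE subr_eq addrC. Qed.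
Lemma X0 : X 0 = 1.
Proof. by apply/ffunP=> z; rewrite !ffunE. Qed.
Lemma Xn a n : X a ^+ n = X (a *+ n).
Proof.
elim: n => [|n IH]; first by rewrite expr0 mulr0n X0.
by rewrite exprS IH XM mulrS.
Qed.
Lemma scexpE u n (f : gr) z : (sc u ^+ n * f) z = u ^+ n * f z.
Proof.
elim: n f => [|n IH] f; first by rewrite !expr0 !mul1r.
by rewrite exprS -mulrA scmulE IH mulrA -exprS.
Qed.

Lemma gr_pchar p : p \in [pchar F] -> p \in [pchar gr].
Proof.
case/andP=> pp /eqP p0; rewrite inE pp /=; apply/eqP/ffunP=> z.
rewrite ffunMnE !ffunE; case: (z == 0) => /=; [exact: p0 | exact: mul0rn].
Qed.

Lemma y_nil p (x : G) q : p \in [pchar F] -> p.-nat q -> x *+ q = 0 ->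
  (1 - X x) ^+ q = 0.
Proof.
move=> pF pq xq.
have hc : [pchar gr].-nat q.
  by rewrite (eq_pnat _ (pcharf_eq (gr_pchar pF))).
rewrite exprDn_pchar // expr1n exprNn Xn xq X0 mulr1.
have : (1 + (-1)) ^+ q = 0 :> gr.
  rewrite subrr expr0n; case: eqP => // q0; move: pq; rewrite q0 //.
by rewrite exprDn_pchar // expr1n.
Qed.

Definition Sp (r : nat) (y : 'I_r -> gr) (a : gr) := exists cf : 'I_r -> gr, a = \sum_j cf j * y j.

Lemma span_X r (x : 'I_r -> G) (k : 'I_r -> nat) :
  Sp (fun j => 1 - X (x j)) (1 - X (\sum_j x j *+ k j)).
Proof.
set y := fun j => 1 - X (x j).
have SpD : forall a b, Sp y a -> Sp y b -> Sp y (a + b).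
  by move=> a b [c1 ->] [c2 ->]; exists (fun j => c1 j + c2 j); rewrite -big_split; apply: eq_bigr => j _; rewrite mulrDl.
have SpM : forall c a, Sp y a -> Sp y (c * a).
  by move=> c a [c1 ->]; exists (fun j => c * c1 j); rewrite big_distrr; apply: eq_bigr => j _ /=; rewrite mulrA.
have Sp0 : Sp y 0 by exists (fun _ => 0); rewrite big1 // => j _; rewrite mul0r.
pose P g := Sp y (1 - X g).
have PD : forall a b, P a -> P b -> P (a + b).
  move=> a b Pa Pb; rewrite /P.
  have -> : 1 - X (a + b) = (1 - X a) + X a * (1 - X b) by rewrite mulrBr mulr1 XM addrA subrK.
  by apply: SpD => //; apply: SpM.
apply: (big_ind P); first by rewrite /P X0 subrr.
  exact: PD.
move=> j _; elim: (k j) => [|n IH]; first by rewrite mulr0n /P X0 subrr.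
rewrite mulrS; apply: PD => //.
exists (fun i => (i == j)%:R); rewrite (bigD1 j) //= eqxx mul1r big1 ?addr0 // => i /negbTE ->.
by rewrite mul0r.
Qed.
End GR.

Fixpoint allm n : seq bitseq :=
  if n is n'.+1 then map (cons true) (allm n') ++ map (cons false) (allm n') else [:: [::]].

Lemma size_allm n m : m \in allm n -> size m = n.
Proof.
elim: n m => [|n IH] m /=; first by rewrite inE => /eqP ->.
by rewrite mem_cat => /orP[] /mapP[m' /IH <- ->].
Qed.


Lemma prod_coef (G : finZmodType) (F : comNzRingType) (u : F) (R : seq G) z :
  (\prod_(g <- R) (sc G u - X F g)) z =
  \sum_(m <- allm (size R)) (sigma (mask m R) == z)%:R * ((-1) ^+ count id m * u ^+ (size R - count id m)).
Proof.
elim: R z => [|a R IH] z.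
  by rewrite big_nil /= big_cons big_nil goneE /sigma /= big_nil addr0 expr0 subn0 expr0 !mulr1 eq_sym.
rewrite big_cons mulrBl gaddE goppE scmulE XmulE !IH /= big_cat !big_map /=.
rewrite [LHS]addrC -sumrN; congr (_ + _).
  apply: eq_bigr => m _; rewrite /sigma /= big_cons add1n.
  rewrite subSS exprS mulN1r mulNr mulrN; congr (- (_ * _)).
  by rewrite (eq_sym (a + _)) eq_sym subr_eq addrC.
rewrite big_distrr /= big_seq_cond [RHS]big_seq_cond; apply: eq_bigr => m /andP[hm _].
rewrite add0n subSn; last by rewrite -(size_allm hm) count_size.
by rewrite exprS mulrCA; congr (_ * _); rewrite mulrCA.
Qed.


Lemma basis_ind (G : finZmodType) (b : seq G) (H : {group G}) :
  \big[dprod/1%g]_(x <- b) <[x]>%g = H -> (forall x, x \in b -> x != 0) ->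
  [/\ uniq b,
      (forall k : G -> nat, \sum_(x <- b) x *+ k x \in H),
      (forall h, h \in H -> exists k : G -> nat, h = \sum_(x <- b) x *+ k x) &
      (forall k : G -> nat, (forall x, x \in b -> k x < #[x]%g)%N ->
          \sum_(x <- b) x *+ k x = 0 -> forall x, x \in b -> k x = 0%N)].
Proof.
elim: b H => [|y b IH] H.
  rewrite big_nil => <- _; split => //.
  - by move=> k; rewrite big_nil; apply/set1P.
  - by move=> h /set1P ->; exists (fun _ => 0%N); rewrite big_nil.
move=> defH nz.
have nz' : forall x, x \in b -> x != 0 by move=> x hx; apply: nz; rewrite inE hx orbT.
rewrite big_cons in defH.
set B := \big[dprod/1%g]_(x <- b) <[x]>%g in defH.
have [[K H' eK eH'] mulH _ tI] := dprodP defH.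
have defB : \big[dprod/1%g]_(x <- b) <[x]>%g = H' by rewrite -eH'.
have [Ub MemB GenB UnB] := IH H' defB nz'.
rewrite -eH' in MemB GenB.
have ytriv : forall g, g \in <[y]>%g -> g \in B -> g = 0.
  by move=> g h1 h2; apply/set1P; rewrite -set1gE -tI inE h1 h2.
have Mem : forall k : G -> nat, \sum_(x <- y :: b) x *+ k x \in H.
  move=> k; rewrite big_cons -mulH; apply: (@mem_mulg _ _ _ (y *+ k y) (\sum_(x <- b) x *+ k x)).
    exact: mem_cycle.
  exact: MemB.
have yb : y \notin b.
  apply/negP => yb.
  have : y = 0.
    apply: ytriv; first exact: cycle_id.
    have -> : y = \sum_(x <- b) x *+ (x == y).
      by rewrite (bigD1_seq y) //= eqxx mulr1n big1 ?addr0 // => x /negbTE ->.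
    exact: MemB.
  by apply/eqP; apply: nz; rewrite inE eqxx.
split => //.
- by rewrite /= Ub yb.
- move=> h; rewrite -mulH => /mulsgP [a c ha hc ->].
  have [i ->] := cycleP _ _ ha.
  have [k' ->] := GenB c hc.
  exists (fun x => if x == y then i else k' x).
  rewrite big_cons eqxx; congr (_ + _).
  apply: eq_big_seq => x hx; case: eqP => // exy; by move: yb; rewrite -exy hx.
- move=> k hk; rewrite big_cons => hs.
  have hy : y *+ k y = 0.
    apply: ytriv; first exact: mem_cycle.
    have -> : y *+ k y = - \sum_(x <- b) x *+ k x by apply/eqP; rewrite -addr_eq0 hs.
    have := MemB k; rewrite eH' => hm; exact: (groupVr hm).
  have ky0 : k y = 0%N.
    have : (#[y]%g %| k y)%N by rewrite order_dvdn; apply/eqP; exact: hy.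
    have := hk y (mem_head _ _); case: (k y) => // n hn /dvdn_leq; rewrite ltnNge in hn.
    by move=> /(_ isT) h; rewrite h in hn.
  rewrite hy add0r in hs.
  move=> x; rewrite inE => /orP[/eqP -> //|hx].
  exact: (UnB k (fun z hz => hk z (@mem_behead _ (y :: b) z hz)) hs x hx).
Qed.

Lemma basis_G (G : finZmodType) : exists b : seq G,
  [/\ uniq b,
      (forall h : G, exists k : G -> nat, h = \sum_(x <- b) x *+ k x) &
      (forall k : G -> nat, (forall x, x \in b -> k x < #[x]%g)%N ->
          \sum_(x <- b) x *+ k x = 0 -> forall x, x \in b -> k x = 0%N)].
Proof.
have [b defG atype] := @abelian_structure G [set: G]%G (FinRing.zmod_abelian _).
have nz : forall x, x \in b -> x != 0.
  move=> x xb; have := abelian_type_gt1 [set: G]; rewrite -atype => /allP /(_ #[x]%g).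
  rewrite map_f // => /(_ isT) /=; apply: contraL => /eqP ->.
  by rewrite (@order1 G).
have [Ub _ Gen Un] := basis_ind defG nz.
exists b; split => // h; apply: Gen; exact: in_setT.
Qed.


Lemma sum_count (G : finZmodType) (b T : seq G) : uniq b -> {subset T <= b} ->
  sigma T = \sum_(x <- b) x *+ count_mem x T.
Proof.
move=> Ub; elim: T => [|a T IH] sub.
  by rewrite /sigma big_nil big1 // => x _; rewrite mulr0n.
have ab : a \in b by apply: sub; rewrite mem_head.
rewrite /sigma big_cons -/(sigma T) IH; last by move=> x hx; apply: sub; rewrite inE hx orbT.
under [RHS]eq_bigr do rewrite /= mulrnDr.
rewrite big_split /=; congr (_ + _).
by rewrite (bigD1_seq a) //= eqxx mulr1n big1 ?addr0 // => x /negbTE; rewrite eq_sym => ->.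
Qed.

Fixpoint mkZ (G : finZmodType) (b : seq G) : seq G :=
  if b is x :: b' then nseq (#[x]%g).-1 x ++ mkZ b' else [::].

Lemma size_mkZ (G : finZmodType) (b : seq G) : size (mkZ b) = (\sum_(x <- b) (#[x]%g).-1)%N.
Proof. by elim: b => [|x b IH] /=; rewrite ?big_nil // big_cons size_cat size_nseq IH. Qed.

Lemma count_mkZ (G : finZmodType) (b : seq G) y : uniq b ->
  count_mem y (mkZ b) = if y \in b then (#[y]%g).-1 else 0%N.
Proof.
elim: b => [|x b IH] //= /andP[xb Ub].
rewrite count_cat count_nseq IH // inE /=.
case: (eqVneq x y) => [<-|nxy] /=; first by rewrite (negbTE xb) mem_head mul1n addn0.
by rewrite mul0n add0n inE eq_sym (negbTE nxy).
Qed.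

Lemma D_bound (G : finZmodType) D (b : seq G) : davenport_prop G D -> uniq b ->
  (forall k : G -> nat, (forall x, x \in b -> k x < #[x]%g)%N ->
          \sum_(x <- b) x *+ k x = 0 -> forall x, x \in b -> k x = 0%N) ->
  (\sum_(x <- b) (#[x]%g).-1 < D)%N.
Proof.
move=> hD Ub Un; rewrite ltnNge; apply/negP => hle.
have [T [sub nT zs]] : exists T, [/\ submseq T (mkZ b), T != [::] & zero_sum T] by apply: hD; rewrite size_mkZ.
have Tb : {subset T <= b}.
  move=> g gT; have := sub g; rewrite count_mkZ //; case: ifP => // _.
  by rewrite leqn0 => /eqP /count_memPn; rewrite gT.
have := Un (fun x => count_mem x T).
have hk : forall x, x \in b -> (count_mem x T < #[x]%g)%N.
  move=> x xb; apply: (leq_ltn_trans (sub x)); rewrite count_mkZ // xb.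
  by rewrite prednK ?order_gt0.
move=> /(_ hk); rewrite -sum_count // => /(_ zs) h0.
case: T nT sub zs Tb h0 {hk} => // a T _ _ _ Tb h0.
have := h0 a (Tb a (mem_head _ _)); rewrite /= eqxx //.
Qed.


Lemma coef_u (R : comNzRingType) k i : ((('X : {poly R}) + 1) ^+ k)`_i = ('C(k, i))%:R.
Proof.
elim: k i => [|k IH] i.
  by rewrite expr0 coef1 bin0n; case: i.
rewrite exprSr mulrDr mulr1 coefD coefMX.
case: i => [|i] /=; rewrite !IH; first by rewrite add0r !bin0.
by rewrite binS natrD addrC.
Qed.

Lemma mask_nil (T : eqType) (m : bitseq) (s : seq T) : count id m = 0%N -> mask m s = [::].
Proof. by elim: m s => [|[] m IH] [|x s] //= /IH. Qed.

Lemma mask_one (T : eqType) (m : bitseq) (s : seq T) : size m = size s -> count id m = 1%N ->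
  exists2 a, a \in s & mask m s = [:: a].
Proof.
move=> hs hc; have := size_mask hs; rewrite hc.
case E: (mask m s) => [|a [|]] //= _; exists a => //.
by apply: (mem_mask (m := m)); rewrite E mem_head.
Qed.

Lemma sum_allm0 (K : nzRingType) n :
  \sum_(m <- allm n) ((count id m == 0%N)%:R : K) = 1.
Proof.
elim: n => [|n IH] /=; first by rewrite big_cons big_nil addr0.
rewrite big_cat !big_map /= big1_eq add0r.
by under eq_bigr do rewrite add0n.
Qed.

Lemma main_alg p (G : finZmodType) D (R : seq G) t :
  prime p -> p.-nat #|G| -> davenport_prop G D ->
  size R = (D + t - 1)%N -> (0 < t)%N -> (t < p)%N -> 0 \notin R ->
  (forall m, m \in allm (size R) -> sigma (mask m R) = 0 -> (count id m <= t)%N) -> False.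
Proof.
move=> pp pG hD hn t0 tp R0 hcnt.
have [b [Ub Gen Un]] := basis_G G.
have hLb := D_bound hD Ub Un.
set n := size R in hn hcnt.
pose F := {poly 'F_p}.
have pF : p \in [pchar F] by rewrite pchar_poly; exact: pchar_Fp.
pose r := size b.
pose xj (j : 'I_r) := nth 0 b j.
pose y j := 1 - X F (xj j).
pose q j := #[xj j]%g.
have hy : forall j, y j ^+ q j = 0.
  move=> j; apply: (y_nil pF).
    apply: pnat_dvd pG; rewrite -cardsT; apply: order_dvdG; exact: in_setT.
  exact: (expg_order (xj j)).
pose s := map (fun g => 1 - X F g) R.
have hs : forall a, a \in s -> exists cf : 'I_r -> gr G F, a = \sum_j cf j * y j.
  move=> a /mapP [g gR ->]; have [k ->] := Gen g.
  rewrite (big_nth 0) big_mkord.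
  by have [cf hcf] := span_X F xj (fun j => k (xj j)); exists cf; exact: hcf.
have [B hB] := nilp_lemma (sc G 'X) hy hs (fun _ => 0%N).
rewrite big1 ?mul1r in hB; last by move=> j _; rewrite expr0.
rewrite big1_eq addn0 in hB.
have hq : (\sum_j (q j).-1 = \sum_(x <- b) (#[x]%g).-1)%N.
  by rewrite (big_nth 0) big_mkord.
rewrite hq size_map -/n big_map in hB.
pose u : F := 'X + 1.
have hsc : forall g, sc G 'X + (1 - X F g) = sc G u - X F g.
  move=> g; rewrite addrA; congr (_ - _); apply/ffunP => z; rewrite !ffunE.
  by rewrite mulrDr mulr1.
rewrite (eq_bigr (fun g => sc G u - X F g)) in hB; last by move=> g _; exact: hsc.
have h0 := congr1 (fun f : gr G F => f 0) hB; rewrite /= prod_coef scexpE -/n in h0.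
set Lb := (\sum_(x <- b) (#[x]%g).-1)%N in h0 hLb.
have htn : (t <= n)%N by lia.
have hs_t : (t <= n - Lb)%N by lia.
pose E : F := \sum_(m <- allm n) (sigma (mask m R) == 0)%:R * ((-1) ^+ count id m * u ^+ (t - count id m)).
have hE : u ^+ (n - t) * E = 'X^t * ('X^(n - Lb - t) * B 0).
  rewrite mulrA -exprD subnKC // -h0 big_distrr /=; apply: eq_big_seq => m hm.
  case: eqP => [h|_]; last by rewrite !mul0r mulr0.
  have hc := hcnt m hm h.
  rewrite !mul1r mulrCA -exprD; congr (_ * _ ^+ _); lia.
have dv : 'X^t %| E.
  have : 'X^t %| E * u ^+ (n - t) by rewrite mulrC hE dvdp_mulIl.
  rewrite Gauss_dvdpl //; apply: coprimep_expl; apply: coprimep_expr.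
  by rewrite coprimep_sym coprimepX /root hornerD hornerX hornerC add0r oner_neq0.
case/dvdpP: dv => W hW.
have c0 : E`_t.-1 = 0 by rewrite hW coefMXn ltn_predL t0.
have Ct : 'C(t, t.-1) = t by case: (t) t0 => // t' _; rewrite binSn.
have term : forall m, m \in allm n ->
    ((sigma (mask m R) == 0)%:R * ((-1) ^+ count id m * u ^+ (t - count id m)) : F)`_t.-1
    = ((count id m == 0%N)%:R * t%:R : 'F_p).
  move=> m hm; case: eqP => [h|h].
    have hc := hcnt m hm h.
    rewrite mul1r; case ec: (count id m) hc => [|[|c']] hc.
    - by rewrite expr0 mul1r subn0 coef_u Ct mul1r.
    - have [a aR ma] := mask_one (size_allm hm) ec.
      by move: h; rewrite ma /sigma big_cons big_nil addr0 => ha; rewrite -ha aR in R0.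
    - rewrite -signr_odd; case: (odd _); rewrite ?expr0 ?expr1 ?mul1r ?mulN1r ?coefN coef_u bin_small ?oppr0 ?mul0r //; lia.
  rewrite mul0r coef0; case: eqP => hc0; last by rewrite mul0r.
  have hm0 := mask_nil R hc0.
  by move: h; rewrite hm0 /sigma big_nil.
have c1 : E`_t.-1 = t%:R.
  rewrite coef_sum (eq_big_seq _ term) -big_distrl /= sum_allm0 mul1r //.
have := val_Fp_nat pp t; rewrite -c1 c0 /= modn_small //.
by move=> ht; rewrite -ht in t0.
Qed.


Theorem theorem2p1 (p : nat) (G : finZmodType) (D : nat) (S : seq G) (i : nat) :
  prime p -> p.-nat #|G| ->
  is_davenport G D ->
  normal_seq D S ->
  size S = (D + i - 1)%N ->
  (1 <= i <= p - 1)%N ->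
  exists T : seq G, perm_eq S (nseq i 0 ++ T) /\ zero_sumfree T.
Proof.
move=> pp pG [D0 hD _] [hDS hnorm] hS /andP[i1 ip].
have p1 := prime_gt1 pp.
pose z := count_mem 0 S.
pose R := [seq x <- S | predC (pred1 0) x].
have cR0 : count_mem 0 R = 0%N.
  by apply/count_memPn; rewrite mem_filter /= eqxx.
have cRx : forall x, x != 0 -> count_mem x R = count_mem x S.
  move=> x hx; rewrite count_filter; apply: eq_count => y /=.
  by case: eqP => // ->; rewrite hx.
have sub_lemma : forall (T1 : seq G) (k : nat), submseq T1 R -> (k <= z)%N -> submseq (T1 ++ nseq k 0) S.
  move=> T1 k hT hk x; rewrite count_cat count_nseq /=.
  case: (eqVneq x 0) => [->|hx].
    have := hT 0; rewrite cR0 leqn0 => /eqP ->; rewrite mul1n add0n; exact: hk.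
  rewrite mul0n addn0 -cRx //; exact: hT x.
have zs_lemma : forall (T1 : seq G) (k : nat), sigma (T1 ++ nseq k 0) = sigma T1.
  move=> T1 k; rewrite /sigma big_cat /= [X in _ + X]big1_seq ?addr0 //.
  by move=> x /andP[_ /nseqP [-> _]].
have hsize : forall T, submseq T S -> zero_sum T -> (size T <= i)%N.
  move=> T hT hz; have := hnorm T hT hz; lia.
have hzi1 : (z <= i)%N.
  have := hsize (nseq z 0) (sub_lemma [::] z (fun x => leq0n _) (leqnn z)).
  rewrite size_nseq; apply; rewrite /zero_sum -(cat0s (nseq z 0)) zs_lemma /sigma big_nil //.
have hsR : size R = (size S - z)%N.
  by rewrite size_filter -(count_predC (pred1 0) S) /z addKn.
have hzi2 : (i <= z)%N.
  rewrite leqNgt; apply/negP => hlt.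
  apply: (main_alg (R := R) (t := (i - z)%N) pp pG hD); first by rewrite hsR; lia.
  - lia.
  - lia.
  - by apply/count_memPn; exact: cR0.
  move=> m hm hz0.
  have hsub : submseq (mask m R) R by move=> x; exact: leq_count_mask.
  have := hsize _ (sub_lemma _ z hsub (leqnn z)).
  rewrite /zero_sum zs_lemma => /(_ hz0).
  rewrite size_cat size_nseq (size_mask (size_allm hm)); lia.
have hzi : z = i by apply/eqP; rewrite eqn_leq hzi1 hzi2.
exists R; split.
  have E : [seq x <- S | pred1 0 x] = nseq i 0.
    have := filter_all (pred1 0) S; move/all_pred1P => ->.
    by rewrite size_filter -/z hzi.
  by rewrite perm_sym -E (perm_filterC (pred1 0) S).
move=> U hU nU; apply/eqP => hs.
have := hsize _ (sub_lemma U i hU (eq_leq (esym hzi))).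
rewrite /zero_sum zs_lemma => /(_ hs); rewrite size_cat size_nseq.
by case: U nU {hU hs} => //= a U _; lia.
Qed.
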